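(* Let $(X,d)$ be a proper metric space (every bounded closed set is compact) and let $f:X\to\mathbb{R}$ be continuous with $s[f]:X\to\mathbb{R}$ continuous. Then for every $x\in X$ with $s[f](x)\neq0$ there exist $T>0$ and a $1$-Lipschitz curve $\gamma:[0,T]\to X$ with $\gamma(0)=x$ and \[ f(\gamma(t))=f(x)-\int_0^t s[f](\gamma(s))\,ds\quad\text{for all } t\in[0,T]. \]
   Context: Local slope: $s[f](\bar x):=\limsup_{y\to\bar x}\frac{\max\{f(\bar x)-f(y),0\}}{d(\bar x,y)}$, with $s[f](\bar x)=0$ if $\bar x$ is isolated. *)

(* Defs.v *)
From Stdlib Require Import Reals List.
From Coquelicot Require Import Coquelicot.
Open Scope R_scope.

Section Metric.
Context {X : Type} (d : X -> X -> R).

Definition is_metric : Prop :=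
  (forall x y, 0 <= d x y) /\
  (forall x y, d x y = 0 <-> x = y) /\
  (forall x y, d x y = d y x) /\
  (forall x y z, d x z <= d x y + d y z).

Definition m_open (U : X -> Prop) : Prop :=
  forall x, U x -> exists e, 0 < e /\ forall y, d x y < e -> U y.

Definition m_closed (K : X -> Prop) : Prop := m_open (fun x => ~ K x).

Definition m_bounded (K : X -> Prop) : Prop :=
  exists x0 r, forall x, K x -> d x0 x <= r.

Definition m_compact (K : X -> Prop) : Prop :=
  forall (I : Type) (U : I -> X -> Prop),
    (forall i, m_open (U i)) ->
    (forall x, K x -> exists i, U i x) ->
    exists l : list I, forall x, K x -> exists i, In i l /\ U i x.

Definition proper_metric : Prop :=
  forall K, m_bounded K -> m_closed K -> m_compact K.

Definition m_continuous (f : X -> R) : Prop :=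
  forall x e, 0 < e -> exists delta, 0 < delta /\
    forall y, d x y < delta -> Rabs (f y - f x) < e.

Definition m_isolated (x : X) : Prop :=
  exists delta, 0 < delta /\ forall y, d x y < delta -> y = x.

(* limsup_{y -> x} max(f x - f y, 0) / d(x,y)
   = inf_{delta > 0} sup_{0 < d(x,y) < delta} max(f x - f y, 0)/d(x,y)  (in Rbar) *)
Definition slope_limsup (f : X -> R) (x : X) : Rbar :=
  Rbar_glb (fun L => exists delta, 0 < delta /\
    L = Lub_Rbar (fun v => exists y, 0 < d x y < delta /\
                                     v = Rmax (f x - f y) 0 / d x y)).

Definition is_local_slope (f : X -> R) (x : X) (s : Rbar) : Prop :=
  (m_isolated x /\ s = Finite 0) \/ (~ m_isolated x /\ s = slope_limsup f x).

End Metric.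

(* Main.v *)
Require Import Defs.
From Stdlib Require Import Reals List Lra Lia ZArith Classical ClassicalEpsilon Cantor.
From Coquelicot Require Import Coquelicot.
Open Scope R_scope.

Section S.
Context {X : Type} (d : X -> X -> R) (f s : X -> R).
Hypothesis Hm : is_metric d.
Hypothesis Hp : proper_metric d.
Hypothesis Hf : m_continuous d f.
Hypothesis Hsl : forall x, is_local_slope d f x (Finite (s x)).
Hypothesis Hs : m_continuous d s.

Lemma d_pos x y : 0 <= d x y. Proof. apply Hm. Qed.
Lemma d_sym x y : d x y = d y x. Proof. apply Hm. Qed.
Lemma d_tri x y z : d x z <= d x y + d y z. Proof. apply Hm. Qed.
Lemma d_refl x : d x x = 0. Proof. apply Hm. reflexivity. Qed.
Lemma d_eq x y : d x y = 0 -> x = y. Proof. apply Hm. Qed.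

Lemma nonisol z : ~ m_isolated d z -> forall e, 0 < e -> exists y, 0 < d z y < e.
Proof.
  intros Hn e He. apply NNPP; intro H. apply Hn. exists e; split; auto.
  intros y Hy. apply NNPP; intro Hne. apply H. exists y. split; auto.
  destruct (Rle_lt_or_eq_dec 0 (d z y) (d_pos z y)) as [Hlt|Heq]; auto.
  exfalso; apply Hne. symmetry. apply d_eq. auto.
Qed.

Lemma s_nonneg z : 0 <= s z.
Proof.
  destruct (Hsl z) as [[_ E]|[Hni E]].
  - injection E; intros ->; lra.
  - unfold slope_limsup, Rbar_glb in E. destruct (Rbar_ex_glb _) as [l [Hlb Hgr]].
    simpl in E. subst l.
    assert (H0 : Rbar_le (Finite 0) (Finite (s z))).
    { apply Hgr. intros L [del [Hd ->]].
      destruct (nonisol z Hni del Hd) as [y Hy].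
      apply Rbar_le_trans with (Finite (Rmax (f z - f y) 0 / d z y)).
      + simpl. apply Rdiv_le_0_compat. apply Rmax_r. lra.
      + destruct (Lub_Rbar_correct (fun v => exists y, 0 < d z y < del /\
                                     v = Rmax (f z - f y) 0 / d z y)) as [Hub _].
        apply Hub. exists y. auto. }
    simpl in H0. auto.
Qed.

Lemma P1 z e : 0 < e -> exists del, 0 < del /\ forall y, d z y < del ->
   f z - f y <= (s z + e) * d z y.
Proof.
  intros He. destruct (Hsl z) as [[[del [Hd Hi]] E]|[Hni E]].
  - exists del; split; auto. intros y Hy. rewrite (Hi y Hy), d_refl. lra.
  - unfold slope_limsup, Rbar_glb in E. destruct (Rbar_ex_glb _) as [l [Hlb Hgr]].
    simpl in E. subst l.
    assert (Hex : exists L, (exists del, 0 < del /\ L = Lub_Rbar (fun v => exists y, 0 < d z y < del /\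
                                     v = Rmax (f z - f y) 0 / d z y)) /\ Rbar_lt L (Finite (s z + e))).
    { apply NNPP; intro H.
      assert (Hlb2 : Rbar_le (Finite (s z + e)) (Finite (s z))).
      { apply Hgr. intros L HL. apply Rbar_not_lt_le. intro Hc. apply H. exists L; auto. }
      simpl in Hlb2. lra. }
    destruct Hex as [L [[del [Hd ->]] HL]].
    exists del; split; auto. intros y Hy.
    destruct (Rle_lt_or_eq_dec 0 (d z y) (d_pos z y)) as [Hlt|Heq].
    + destruct (Lub_Rbar_correct (fun v => exists y, 0 < d z y < del /\
                                     v = Rmax (f z - f y) 0 / d z y)) as [Hub _].
      assert (Hv := Hub (Rmax (f z - f y) 0 / d z y) (ex_intro _ y (conj (conj Hlt Hy) eq_refl))).
      assert (Hv2 := Rbar_le_lt_trans _ _ _ Hv HL). simpl in Hv2.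
      assert (Rmax (f z - f y) 0 < (s z + e) * d z y).
      { apply Rmult_lt_compat_r with (r := d z y) in Hv2; auto.
        unfold Rdiv in Hv2. rewrite Rmult_assoc, Rinv_l in Hv2; lra. }
      assert (f z - f y <= Rmax (f z - f y) 0) by apply Rmax_l. lra.
    + rewrite <- Heq. assert (z = y) by (apply d_eq; auto). subst. lra.
Qed.

Lemma P2 z b : 0 <= b -> b < s z -> forall del, 0 < del ->
  exists y, 0 < d z y < del /\ b * d z y < f z - f y.
Proof.
  intros Hb Hbs del Hd. destruct (Hsl z) as [[_ E]|[Hni E]].
  - injection E; intros; lra.
  - unfold slope_limsup, Rbar_glb in E. destruct (Rbar_ex_glb _) as [l [Hlb Hgr]].
    simpl in E. subst l.
    set (S := fun v => exists y, 0 < d z y < del /\ v = Rmax (f z - f y) 0 / d z y).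
    assert (HL : Rbar_le (Finite (s z)) (Lub_Rbar S)).
    { apply Hlb. exists del; split; auto. }
    assert (Hex : exists v, S v /\ b < v).
    { apply NNPP; intro H.
      destruct (Lub_Rbar_correct S) as [_ Hl].
      assert (Rbar_le (Lub_Rbar S) (Finite b)).
      { apply Hl. intros v Hv. simpl. apply Rnot_lt_le. intro. apply H. exists v; auto. }
      assert (Hc := Rbar_le_trans _ _ _ HL H0). simpl in Hc. lra. }
    destruct Hex as [v [[y [Hy ->]] Hv]].
    exists y; split; auto.
    assert (b * d z y < Rmax (f z - f y) 0).
    { apply Rmult_lt_compat_r with (r := d z y) in Hv; try lra.
      unfold Rdiv in Hv. rewrite Rmult_assoc, Rinv_l in Hv; lra. }
    unfold Rmax in H. destruct (Rle_dec (f z - f y) 0); try lra.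
    assert (0 <= b * d z y) by (apply Rmult_le_pos; lra). lra.
Qed.


Definition cball z r := fun y => d z y <= r.

Lemma cball_compact z r : m_compact d (cball z r).
Proof.
  apply Hp.
  - exists z, r. intros y H; exact H.
  - intros y Hy. unfold cball in Hy. exists (d z y - r). split; [lra|].
    intros w Hw Hc. unfold cball in Hc.
    assert (H1 := d_tri z w y). rewrite (d_sym w y) in H1. lra.
Qed.

Lemma ball_open z e : m_open d (fun w => d z w < e).
Proof.
  intros y Hy. exists (e - d z y). split; [lra|].
  intros w Hw. assert (H1 := d_tri z y w). lra.
Qed.

Definition infset (A : nat -> Prop) := forall N, exists n, (N <= n)%nat /\ A n.

Lemma list_max_nat {I} (g : I -> nat) (l : list I) : exists M, forall i, In i l -> (g i <= M)%nat.
Proof.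
  induction l as [|a l [M HM]].
  - exists 0%nat. intros i [].
  - exists (Nat.max (g a) M). intros i [<-|Hi].
    + apply Nat.le_max_l.
    + eapply Nat.le_trans; [apply HM; auto|apply Nat.le_max_r].
Qed.

Lemma cluster K (u : nat -> X) (A : nat -> Prop) : m_compact d K -> infset A ->
  (forall n, A n -> K (u n)) ->
  exists p, forall e, 0 < e -> forall N, exists n, (N <= n)%nat /\ A n /\ d (u n) p < e.
Proof.
  intros HK HA HuK. apply NNPP; intro Hno.
  assert (Hp' : forall p, exists e N, 0 < e /\ forall n, (N <= n)%nat -> A n -> e <= d (u n) p).
  { intro p. apply NNPP; intro H1. apply Hno. exists p. intros e He N.
    apply NNPP; intro H2. apply H1. exists e, N. split; auto.
    intros n Hn HAn. apply Rnot_lt_le. intro H3. apply H2. exists n. auto. }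
  set (I := {t : X * R * nat | 0 < snd (fst t) /\ forall n, (snd t <= n)%nat -> A n -> snd (fst t) <= d (u n) (fst (fst t))}).
  set (U := fun i : I => fun w => d (fst (fst (proj1_sig i))) w < snd (fst (proj1_sig i))).
  destruct (HK I U) as [l Hl].
  - intros i. apply ball_open.
  - intros w Kw. destruct (Hp' w) as [e [N [He HN]]].
    exists (exist _ (w, e, N) (conj He HN)). unfold U; simpl. rewrite d_refl. auto.
  - destruct (list_max_nat (fun i : I => snd (proj1_sig i)) l) as [M HM].
    destruct (HA M) as [n [Hn HAn]].
    destruct (Hl (u n) (HuK n HAn)) as [i [Hi HU]].
    destruct i as [[[p e] N] [He HN]]. unfold U in HU; simpl in HU.
    assert (HM' := HM _ Hi); simpl in HM'.
    assert (H1 := HN n (Nat.le_trans _ _ _ HM' Hn) HAn). simpl in H1.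
    rewrite d_sym in H1. lra.
Qed.

Lemma list_min {I} (P : I -> Prop) (g : I -> R) (l : list I) : (exists p, In p l /\ P p) ->
  exists p, In p l /\ P p /\ forall p', In p' l -> P p' -> g p <= g p'.
Proof.
  induction l as [|a l IH]; intros [p [Hp1 Hp2]].
  - destruct Hp1.
  - destruct (classic (exists p, In p l /\ P p)) as [He|Hne].
    + destruct (IH He) as [q [Hq1 [Hq2 Hq3]]].
      destruct (classic (P a)) as [Pa|nPa].
      * destruct (Rle_dec (g a) (g q)).
        -- exists a. split; [left; auto|split; auto]. intros p' [<-|Hp'] HP'; [lra|].
           specialize (Hq3 p' Hp' HP'). lra.
        -- exists q. split; [right; auto|split; auto]. intros p' [<-|Hp'] HP'; [lra|auto].
      * exists q. split; [right; auto|split; auto]. intros p' [<-|Hp'] HP'; [contradiction|auto].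
    + destruct Hp1 as [<-|Hp1]; [|exfalso; apply Hne; eauto].
      exists a. split; [left; auto|split; auto]. intros p' [<-|Hp'] HP'; [lra|].
      exfalso; apply Hne; eauto.
Qed.

Lemma compact_min K (g : X -> R) z0 : m_compact d K -> K z0 -> m_continuous d g ->
  exists q, K q /\ forall y, K y -> g q <= g y.
Proof.
  intros HK Kz Hg. apply NNPP; intro Hno.
  assert (H : forall q, K q -> exists y, K y /\ g y < g q).
  { intros q Kq. apply NNPP; intro H1. apply Hno. exists q. split; auto.
    intros y Ky. apply Rnot_lt_le. intro H2. apply H1. eauto. }
  set (U := fun p : X => fun w => K p /\ g p < g w).
  destruct (HK X U) as [l Hl].
  - intros p w [Kp Hw]. destruct (Hg w (g w - g p)) as [del [Hd Hdel]]; [lra|].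
    exists del; split; auto. intros y Hy. split; auto. specialize (Hdel y Hy).
    apply Rabs_def2 in Hdel. lra.
  - intros w Kw. destruct (H w Kw) as [y [Ky Hy]]. exists y. split; auto.
  - destruct (list_min K g l) as [p [Hpl [Kp Hmin]]].
    + destruct (Hl z0 Kz) as [i [Hi [Ki _]]]. eauto.
    + destruct (Hl p Kp) as [i [Hi [Ki Hgi]]]. specialize (Hmin i Hi Ki). lra.
Qed.

Lemma dist_cont z : m_continuous d (fun y => d z y).
Proof.
  intros x e He. exists e. split; auto. intros y Hy.
  assert (H1 := d_tri z x y). assert (H2 := d_tri z y x). rewrite (d_sym y x) in H2.
  apply Rabs_def1; lra.
Qed.

Lemma descent z h a : 0 < a -> 0 <= h -> (forall y, d z y <= h -> a < s y) ->
  exists q, d z q <= h /\ a * h <= f z - f q.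
Proof.
  intros Ha Hh Hs'.
  set (psi := fun y => f y + a * d z y).
  assert (Hpc : m_continuous d psi).
  { intros x e He. destruct (Hf x (e/2)) as [d1 [Hd1 H1]]; [lra|].
    destruct (dist_cont z x (e/(2*a))) as [d2 [Hd2 H2]].
    { apply Rdiv_lt_0_compat; lra. }
    exists (Rmin d1 d2). split; [apply Rmin_pos; auto|]. intros y Hy.
    assert (Hy1 : d x y < d1) by (eapply Rlt_le_trans; [apply Hy|apply Rmin_l]).
    assert (Hy2 : d x y < d2) by (eapply Rlt_le_trans; [apply Hy|apply Rmin_r]).
    specialize (H1 y Hy1). specialize (H2 y Hy2). unfold psi.
    replace (f y + a * d z y - (f x + a * d z x)) with ((f y - f x) + a * (d z y - d z x)) by ring.
    eapply Rle_lt_trans; [apply Rabs_triang|]. rewrite Rabs_mult, (Rabs_pos_eq a) by lra.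
    assert (a * Rabs (d z y - d z x) < a * (e / (2 * a))) by (apply Rmult_lt_compat_l; auto).
    replace (a * (e / (2 * a))) with (e/2) in H by (field; lra). lra. }
  destruct (compact_min (cball z h) psi z (cball_compact z h)) as [q [Kq Hq]]; auto.
  { unfold cball. rewrite d_refl. auto. }
  unfold cball in Kq.
  assert (Hqh : h <= d z q).
  { apply Rnot_lt_le. intro Hlt.
    destruct (P2 q a) with (del := h - d z q) as [y [Hy1 Hy2]]; try lra.
    { apply Hs'. auto. }
    assert (Hzy : d z y <= h) by (assert (H1 := d_tri z q y); lra).
    specialize (Hq y Hzy). unfold psi in Hq.
    assert (H1 := d_tri z q y). assert (a * d z y <= a * (d z q + d q y)) by (apply Rmult_le_compat_l; lra).
    lra. }
  exists q. split; auto. assert (Hz := Hq z). unfold cball, psi in Hz. rewrite d_refl in Hz.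
  specialize (Hz Hh).
  assert (a * h <= a * d z q) by (apply Rmult_le_compat_l; lra). unfold psi in Hz. lra.
Qed.

Context (x0 : X).

Definition step h z := epsilon (inhabits z)
  (fun q => 0 <= h -> d z q <= h /\ forall y, d z y <= h -> f q <= f y).

Lemma step_spec h z : 0 <= h -> d z (step h z) <= h /\ forall y, d z y <= h -> f (step h z) <= f y.
Proof.
  intros Hh. unfold step.
  assert (Ex : exists q, 0 <= h -> d z q <= h /\ forall y, d z y <= h -> f q <= f y).
  { destruct (compact_min (cball z h) f z) as [q [Kq Hq]].
    - apply cball_compact.
    - unfold cball; rewrite d_refl; auto.
    - auto.
    - exists q. intros _. split; auto. }
  exact (epsilon_spec (inhabits z) _ Ex Hh).
Qed.

Fixpoint chain h n := match n with O => x0 | S n => step h (chain h n) end.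

Lemma chain_dist h j k : 0 <= h -> d (chain h j) (chain h (j + k)) <= INR k * h.
Proof.
  intros Hh. induction k.
  - rewrite Nat.add_0_r, d_refl. simpl. lra.
  - rewrite Nat.add_succ_r. simpl chain. rewrite S_INR.
    destruct (step_spec h (chain h (j + k)) Hh) as [H1 _].
    assert (H2 := d_tri (chain h j) (chain h (j + k)) (step h (chain h (j+k)))). lra.
Qed.

Lemma chain_mono h j k : 0 <= h -> f (chain h (j + k)) <= f (chain h j).
Proof.
  intros Hh. induction k.
  - rewrite Nat.add_0_r. lra.
  - rewrite Nat.add_succ_r. simpl chain.
    destruct (step_spec h (chain h (j + k)) Hh) as [_ H1].
    specialize (H1 (chain h (j+k))). rewrite d_refl in H1. specialize (H1 Hh). lra.
Qed.

Lemma chain_desc h j k a : 0 <= h -> 0 < a ->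
  (forall i, (i < k)%nat -> forall y, d (chain h (j + i)) y <= h -> a < s y) ->
  INR k * a * h <= f (chain h j) - f (chain h (j + k)).
Proof.
  intros Hh Ha. induction k; intros Hk.
  - rewrite Nat.add_0_r. simpl. lra.
  - rewrite Nat.add_succ_r. simpl chain. rewrite S_INR.
    assert (IH : INR k * a * h <= f (chain h j) - f (chain h (j + k))).
    { apply IHk. intros i Hi. apply Hk. lia. }
    destruct (descent (chain h (j+k)) h a Ha Hh) as [q [Hq1 Hq2]].
    { apply Hk. lia. }
    destruct (step_spec h (chain h (j + k)) Hh) as [_ H1]. specialize (H1 q Hq1). lra.
Qed.

Definition J h t := Z.to_nat (Int_part (t / h)).

Lemma J_spec h t : 0 < h -> 0 <= t -> INR (J h t) * h <= t < INR (J h t) * h + h.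
Proof.
  intros Hh Ht. unfold J. destruct (base_Int_part (t / h)) as [H1 H2].
  set (k := Int_part (t / h)) in *.
  assert (Hk : (0 <= k)%Z).
  { assert (0 <= t / h) by (apply Rdiv_le_0_compat; lra).
    assert (IZR (-1) < IZR k) by (simpl; lra). apply lt_IZR in H0. lia. }
  rewrite INR_IZR_INZ, Z2Nat.id by auto.
  assert (E : t = (t / h) * h) by (field; lra).
  split.
  - rewrite E at 1. apply Rmult_le_compat_r; lra.
  - rewrite E at 1. replace (IZR k * h + h) with ((IZR k + 1) * h) by ring.
    apply Rmult_lt_compat_r; lra.
Qed.

Lemma J_nonpos h t : 0 < h -> t <= 0 -> J h t = 0%nat.
Proof.
  intros Hh Ht. unfold J. destruct (base_Int_part (t / h)) as [H1 H2].
  assert (t / h <= 0).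
  { unfold Rdiv. assert (0 < / h) by (apply Rinv_0_lt_compat; auto). nra. }
  destruct (Int_part (t / h)) eqn:E; auto.
  exfalso. assert (IZR (Z.pos p) <= IZR 0) by (simpl; lra). apply le_IZR in H0. lia.
Qed.

Lemma J_diff h t1 t2 : 0 < h -> t1 <= t2 ->
  (J h t1 <= J h t2)%nat /\ (INR (J h t2) - INR (J h t1)) * h <= t2 - t1 + h /\
  (0 <= t1 -> t2 - t1 - h <= (INR (J h t2) - INR (J h t1)) * h).
Proof.
  intros Hh Ht.
  destruct (Rle_dec t1 0) as [H1|H1].
  - rewrite (J_nonpos h t1 Hh H1). simpl.
    destruct (Rle_dec t2 0) as [H2|H2].
    + rewrite (J_nonpos h t2 Hh H2). simpl. repeat split; intros; try lia; nra.
    + destruct (J_spec h t2 Hh) as [A B]; [lra|]. repeat split; intros; try lia; nra.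
  - destruct (J_spec h t1 Hh) as [A1 B1]; [lra|]. destruct (J_spec h t2 Hh) as [A2 B2]; [lra|].
    assert (INR (J h t1) < INR (J h t2) + 1).
    { apply Rmult_lt_reg_r with h; auto. lra. }
    rewrite <- S_INR in H. apply INR_lt in H.
    repeat split; try lia; lra.
Qed.

Definition hs n := / INR (S n).
Lemma hs_pos n : 0 < hs n.
Proof. unfold hs. apply Rinv_0_lt_compat. apply lt_0_INR. lia. Qed.

Definition gn n t := chain (hs n) (J (hs n) t).

Lemma G1 n t1 t2 : d (gn n t1) (gn n t2) <= Rabs (t1 - t2) + hs n.
Proof.
  assert (Hh := hs_pos n).
  assert (W : forall a b, a <= b -> d (gn n a) (gn n b) <= Rabs (a - b) + hs n).
  { intros a b Hab. destruct (J_diff (hs n) a b Hh Hab) as [E1 [E2 _]].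
    unfold gn. replace (J (hs n) b) with (J (hs n) a + (J (hs n) b - J (hs n) a))%nat by lia.
    eapply Rle_trans; [apply chain_dist; lra|]. rewrite minus_INR by auto.
    rewrite Rabs_left1 by lra. lra. }
  destruct (Rle_dec t1 t2). auto. rewrite d_sym, Rabs_minus_sym. apply W. lra.
Qed.

Lemma G2 n t : d x0 (gn n t) <= Rabs t.
Proof.
  assert (Hh := hs_pos n). unfold gn.
  replace x0 with (chain (hs n) 0) by reflexivity.
  replace (J (hs n) t) with (0 + J (hs n) t)%nat by lia.
  eapply Rle_trans; [apply chain_dist; lra|].
  destruct (Rle_dec t 0).
  - rewrite (J_nonpos _ _ Hh r). simpl. rewrite Rmult_0_l. apply Rabs_pos.
  - destruct (J_spec (hs n) t Hh) as [A _]; [lra|]. rewrite Rabs_pos_eq; lra.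
Qed.

Lemma G3 n : gn n 0 = x0.
Proof. unfold gn. rewrite J_nonpos; auto. apply hs_pos. lra. Qed.

Lemma G4 n t1 t2 : t1 <= t2 -> f (gn n t2) <= f (gn n t1).
Proof.
  intros Ht. assert (Hh := hs_pos n). destruct (J_diff (hs n) t1 t2 Hh Ht) as [E1 _].
  unfold gn. replace (J (hs n) t2) with (J (hs n) t1 + (J (hs n) t2 - J (hs n) t1))%nat by lia.
  apply chain_mono. lra.
Qed.

Lemma G5 n t1 t2 a : 0 < a -> 0 <= t1 <= t2 ->
  (forall y, d (gn n t1) y <= t2 - t1 + 2 * hs n -> a < s y) ->
  a * (t2 - t1 - hs n) <= f (gn n t1) - f (gn n t2).
Proof.
  intros Ha Ht Hy. assert (Hh := hs_pos n).
  destruct (J_diff (hs n) t1 t2 Hh (proj2 Ht)) as [E1 [E2 E3]].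
  specialize (E3 (proj1 Ht)).
  set (j := J (hs n) t1) in *. set (k := (J (hs n) t2 - j)%nat).
  unfold gn. fold j. replace (J (hs n) t2) with (j + k)%nat by (unfold k; lia).
  assert (Hk : INR k = INR (J (hs n) t2) - INR j) by (unfold k; apply minus_INR; auto).
  assert (HD : INR k * a * hs n <= f (chain (hs n) j) - f (chain (hs n) (j + k))).
  { apply chain_desc; [lra|auto|].
    intros i Hi y Hdy. apply Hy. unfold gn. fold j.
    assert (H1 := chain_dist (hs n) j i (Rlt_le _ _ Hh)).
    assert (H2 := d_tri (chain (hs n) j) (chain (hs n) (j + i)) y).
    assert (H3 : INR (S i) <= INR k) by (apply le_INR; lia). rewrite S_INR in H3.
    assert ((INR i + 1) * hs n <= INR k * hs n) by (apply Rmult_le_compat_r; lra).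
    rewrite Hk in H. lra. }
  rewrite Hk in HD.
  assert (a * (t2 - t1 - hs n) <= a * ((INR (J (hs n) t2) - INR j) * hs n)) by (apply Rmult_le_compat_l; lra).
  lra.
Qed.

Lemma hs_small e : 0 < e -> exists N, hs N < e.
Proof.
  intros He. destruct (archimed (/ e)) as [H1 _].
  assert (Hie : 0 < / e) by (apply Rinv_0_lt_compat; auto).
  assert (Hu : (0 <= up (/ e))%Z). { apply le_IZR. simpl. lra. }
  exists (Z.to_nat (up (/ e))). unfold hs. rewrite S_INR, INR_IZR_INZ, Z2Nat.id by auto.
  rewrite <- (Rinv_inv e) at 2. apply Rinv_lt_contravar.
  - apply Rmult_lt_0_compat; lra.
  - lra.
Qed.

Lemma hs_le a b : (a <= b)%nat -> hs b <= hs a.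
Proof. intros H. unfold hs. apply Rinv_le_contravar. apply lt_0_INR; lia. apply le_INR; lia. Qed.

Definition qd m := let (i, k) := Cantor.of_nat m in INR i * hs k.

Lemma qd_nonneg m : 0 <= qd m.
Proof. unfold qd. destruct (Cantor.of_nat m). apply Rmult_le_pos. apply pos_INR. left; apply hs_pos. Qed.

Lemma qd_dense t e : 0 <= t -> 0 < e -> exists m, Rabs (qd m - t) < e.
Proof.
  intros Ht He. destruct (hs_small e He) as [k Hk].
  exists (Cantor.to_nat (J (hs k) t, k)). unfold qd. rewrite Cantor.cancel_of_to.
  destruct (J_spec (hs k) t (hs_pos k) Ht). apply Rabs_def1; lra.
Qed.

Fixpoint sel (P : nat -> nat -> Prop) (k : nat) : nat :=
  epsilon (inhabits 0%nat) (fun n => (match k with O => O | S k' => S (sel P k') end <= n)%nat /\ P k n).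

Lemma sel_spec P : (forall k N, exists n, (N <= n)%nat /\ P k n) ->
  forall k, P k (sel P k) /\ (match k with O => O | S k' => S (sel P k') end <= sel P k)%nat.
Proof.
  intros H k. destruct k as [|k].
  - assert (E := epsilon_spec (inhabits 0%nat) (fun n => (0 <= n)%nat /\ P 0%nat n) (H 0%nat 0%nat)).
    exact (conj (proj2 E) (proj1 E)).
  - assert (E := epsilon_spec (inhabits 0%nat) (fun n => (S (sel P k) <= n)%nat /\ P (S k) n) (H (S k) (S (sel P k)))).
    exact (conj (proj2 E) (proj1 E)).
Qed.

Lemma sel_lt P : (forall k N, exists n, (N <= n)%nat /\ P k n) ->
  forall k k', (k < k')%nat -> (sel P k < sel P k')%nat.
Proof.
  intros H k k' Hk. induction Hk.
  - exact (proj2 (sel_spec P H (S k))).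
  - assert (E := proj2 (sel_spec P H (S m))). change (S (sel P m) <= sel P (S m))%nat in E. lia.
Qed.

Lemma sel_ge P : (forall k N, exists n, (N <= n)%nat /\ P k n) -> forall k, (k <= sel P k)%nat.
Proof.
  intros H k. induction k. lia. assert (E := proj2 (sel_spec P H (S k))).
  change (S (sel P k) <= sel P (S k))%nat in E. lia.
Qed.

Definition conv_along (B : nat -> Prop) (u : nat -> X) p :=
  forall e, 0 < e -> exists N, forall n, B n -> (N <= n)%nat -> d (u n) p < e.

Lemma subseq K (u : nat -> X) (A : nat -> Prop) : m_compact d K -> infset A ->
  (forall n, A n -> K (u n)) ->
  exists B, (forall n, B n -> A n) /\ infset B /\ exists p, conv_along B u p.
Proof.
  intros HK HA Hu. destruct (cluster K u A HK HA Hu) as [p Hcl].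
  set (P := fun k n => A n /\ d (u n) p < hs k).
  assert (HP : forall k N, exists n, (N <= n)%nat /\ P k n).
  { intros k N. destruct (Hcl (hs k) (hs_pos k) N) as [n Hn]. exists n. unfold P. tauto. }
  exists (fun n => exists k, sel P k = n). split; [|split].
  - intros n [k <-]. apply (sel_spec P HP k).
  - intros N. exists (sel P N). split; [apply sel_ge; auto|eauto].
  - exists p. intros e He. destruct (hs_small e He) as [K0 HK0].
    exists (sel P K0). intros n [k <-] Hn.
    assert (Hk : (K0 <= k)%nat).
    { destruct (le_lt_dec K0 k); auto. assert (E := sel_lt P HP k K0 l). lia. }
    destruct (sel_spec P HP k) as [[_ Hd] _]. assert (E := hs_le _ _ Hk). lra.
Qed.

Definition refine m (A : nat -> Prop) : nat -> Prop :=
  epsilon (inhabits (fun _ : nat => True)) (fun B => infset A ->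
    (forall n, B n -> A n) /\ infset B /\ exists p, conv_along B (fun n => gn n (qd m)) p).

Lemma refine_spec m A : infset A ->
  (forall n, refine m A n -> A n) /\ infset (refine m A) /\
  exists p, conv_along (refine m A) (fun n => gn n (qd m)) p.
Proof.
  intros HA. unfold refine.
  apply (epsilon_spec (inhabits (fun _ : nat => True)) (fun B => infset A ->
    (forall n, B n -> A n) /\ infset B /\ exists p, conv_along B (fun n => gn n (qd m)) p)); auto.
  destruct (subseq (cball x0 (qd m)) (fun n => gn n (qd m)) A) as [B HB]; auto.
  - apply cball_compact.
  - intros n _. unfold cball. eapply Rle_trans; [apply G2|]. rewrite Rabs_pos_eq; [lra|apply qd_nonneg].
  - exists B. auto.
Qed.

Fixpoint Aseq m : nat -> Prop := match m with O => fun _ => True | S m' => refine m' (Aseq m') end.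

Lemma Aseq_inf m : infset (Aseq m).
Proof.
  induction m.
  - intros N. exists N. simpl. split; auto.
  - simpl. apply (refine_spec m (Aseq m) IHm).
Qed.

Lemma Aseq_nest m k : (m <= k)%nat -> forall n, Aseq k n -> Aseq m n.
Proof.
  intros H. induction H; auto.
  intros n Hn. apply IHle. simpl in Hn. apply (refine_spec m0 (Aseq m0) (Aseq_inf m0)). auto.
Qed.

Definition PA := fun k n => Aseq k n.
Lemma PA_inf : forall k N, exists n, (N <= n)%nat /\ PA k n.
Proof. intros k N. apply Aseq_inf. Qed.

Definition sig_ k := sel PA k.
Definition Gam k t := gn (sig_ k) t.

Lemma hs_sig k : hs (sig_ k) <= hs k.
Proof. apply hs_le. apply sel_ge. apply PA_inf. Qed.

Lemma conv_q m : exists p, forall e, 0 < e -> exists N, forall k, (N <= k)%nat -> d (Gam k (qd m)) p < e.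
Proof.
  destruct (refine_spec m (Aseq m) (Aseq_inf m)) as [_ [_ [p Hpp]]].
  exists p. intros e He. destruct (Hpp e He) as [N0 HN0].
  exists (Nat.max N0 (S m)). intros k Hk. unfold Gam. apply HN0.
  - change (Aseq (S m) (sig_ k)). apply (Aseq_nest (S m) k); [lia|].
    apply (proj1 (sel_spec PA PA_inf k)).
  - assert (E := sel_ge PA PA_inf k). unfold sig_. lia.
Qed.

Lemma Gam_neg k t : t <= 0 -> Gam k t = x0.
Proof. intros Ht. unfold Gam, gn. rewrite J_nonpos; auto. apply hs_pos. Qed.

Lemma Gam_lip k t1 t2 : d (Gam k t1) (Gam k t2) <= Rabs (t1 - t2) + hs k.
Proof. unfold Gam. assert (H := hs_sig k). assert (H2 := G1 (sig_ k) t1 t2). lra. Qed.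

Lemma Gam_cauchy t e : 0 < e -> exists N, forall k l, (N <= k)%nat -> (N <= l)%nat ->
  d (Gam k t) (Gam l t) < e.
Proof.
  intros He. destruct (Rle_dec t 0) as [Ht|Ht].
  - exists 0%nat. intros. rewrite !Gam_neg, d_refl; auto.
  - destruct (qd_dense t (e/6)) as [m Hqm]; try lra.
    destruct (conv_q m) as [p Hpp]. destruct (Hpp (e/6)) as [N1 HN1]; [lra|].
    destruct (hs_small (e/12)) as [N2 HN2]; [lra|].
    exists (Nat.max N1 N2). intros k l Hk Hl.
    assert (A1 := Gam_lip k t (qd m)). assert (A2 := Gam_lip l (qd m) t).
    assert (A3 := HN1 k ltac:(lia)). assert (A4 := HN1 l ltac:(lia)).
    assert (A5 := hs_le N2 k ltac:(lia)). assert (A6 := hs_le N2 l ltac:(lia)).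
    rewrite Rabs_minus_sym in A1.
    assert (T1 := d_tri (Gam k t) (Gam k (qd m)) (Gam l t)).
    assert (T2 := d_tri (Gam k (qd m)) p (Gam l t)).
    assert (T3 := d_tri p (Gam l (qd m)) (Gam l t)).
    rewrite (d_sym (Gam l (qd m)) p) in A4. lra.
Qed.

Definition islim t p := forall e, 0 < e -> exists N, forall k, (N <= k)%nat -> d (Gam k t) p < e.

Lemma lim_ex t : exists p, islim t p.
Proof.
  destruct (cluster (cball x0 (Rabs t)) (fun k => Gam k t) (fun _ => True)) as [p Hpp].
  - apply cball_compact.
  - intros N; exists N; auto.
  - intros n _. unfold cball, Gam. apply G2.
  - exists p. intros e He. destruct (Gam_cauchy t (e/2)) as [N HN]; [lra|].
    destruct (Hpp (e/2) ltac:(lra) N) as [n [Hn [_ Hd]]].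
    exists N. intros k Hk. specialize (HN k n Hk Hn).
    assert (T := d_tri (Gam k t) (Gam n t) p). lra.
Qed.

Definition gam t := epsilon (inhabits x0) (islim t).

Lemma gam_lim t : islim t (gam t).
Proof. unfold gam. apply epsilon_spec. apply lim_ex. Qed.

Lemma zero_le_eps a : 0 <= a -> (forall e, 0 < e -> a < e) -> a = 0.
Proof.
  intros H1 H2. destruct (Rle_lt_or_eq_dec _ _ H1); auto.
  specialize (H2 a r). lra.
Qed.

Lemma gam_0 : gam 0 = x0.
Proof.
  symmetry. apply d_eq. apply zero_le_eps; [apply d_pos|].
  intros e He. destruct (gam_lim 0 e He) as [N HN]. specialize (HN N (le_n N)).
  rewrite Gam_neg in HN; auto. lra.
Qed.

Lemma gam_lip t1 t2 : d (gam t1) (gam t2) <= Rabs (t1 - t2).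
Proof.
  apply le_epsilon. intros e He.
  destruct (gam_lim t1 (e/3)) as [N1 H1]; [lra|].
  destruct (gam_lim t2 (e/3)) as [N2 H2]; [lra|].
  destruct (hs_small (e/3)) as [N3 H3]; [lra|].
  set (k := Nat.max N1 (Nat.max N2 N3)).
  specialize (H1 k ltac:(unfold k; lia)). specialize (H2 k ltac:(unfold k; lia)).
  assert (A5 := hs_le N3 k ltac:(unfold k; lia)).
  assert (L := Gam_lip k t1 t2).
  assert (T1 := d_tri (gam t1) (Gam k t1) (gam t2)).
  assert (T2 := d_tri (Gam k t1) (Gam k t2) (gam t2)).
  rewrite d_sym in H1. lra.
Qed.

Lemma f_lim t e : 0 < e -> exists N, forall k, (N <= k)%nat -> Rabs (f (Gam k t) - f (gam t)) < e.
Proof.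
  intros He. destruct (Hf (gam t) e He) as [del [Hd Hdel]].
  destruct (gam_lim t del Hd) as [N HN]. exists N. intros k Hk.
  apply Hdel. rewrite d_sym. auto.
Qed.

Lemma gam_mono t1 t2 : t1 <= t2 -> f (gam t2) <= f (gam t1).
Proof.
  intros Ht. apply le_epsilon. intros e He.
  destruct (f_lim t1 (e/2)) as [N1 H1]; [lra|].
  destruct (f_lim t2 (e/2)) as [N2 H2]; [lra|].
  specialize (H1 (Nat.max N1 N2) ltac:(lia)). specialize (H2 (Nat.max N1 N2) ltac:(lia)).
  assert (M := G4 (sig_ (Nat.max N1 N2)) t1 t2 Ht). unfold Gam in *.
  apply Rabs_def2 in H1. apply Rabs_def2 in H2. lra.
Qed.

Lemma gam_desc u e : 0 <= u -> 0 < e -> exists del, 0 < del /\ forall tau, 0 < tau < del ->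
  (s (gam u) - e) * tau <= f (gam u) - f (gam (u + tau)).
Proof.
  intros Hu He. set (a := s (gam u) - e / 2).
  destruct (Rle_dec a 0) as [Ha|Ha].
  - exists 1. split; [lra|]. intros tau Ht. assert (M := gam_mono u (u + tau) ltac:(lra)).
    assert ((s (gam u) - e) * tau <= 0) by (apply Rmult_le_0_r; unfold a in Ha; lra). lra.
  - apply Rnot_le_lt in Ha.
    destruct (Hs (gam u) (e/2)) as [rho [Hr Hrho]]; [lra|].
    exists (rho / 2). split; [lra|]. intros tau Ht.
    assert (Main : a * tau <= f (gam u) - f (gam (u + tau))).
    { apply le_epsilon. intros eta Heta.
      destruct (gam_lim u (rho/8)) as [N1 H1]; [lra|].
      destruct (f_lim u (eta/3)) as [N2 H2]; [lra|].
      destruct (f_lim (u + tau) (eta/3)) as [N3 H3]; [lra|].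
      destruct (hs_small (Rmin (rho/8) (eta/(3*a)))) as [N4 H4].
      { apply Rmin_pos; [lra|]. apply Rdiv_lt_0_compat; lra. }
      set (k := Nat.max (Nat.max N1 N2) (Nat.max N3 N4)).
      specialize (H1 k ltac:(unfold k; lia)). specialize (H2 k ltac:(unfold k; lia)).
      specialize (H3 k ltac:(unfold k; lia)).
      assert (A5 := hs_le N4 k ltac:(unfold k; lia)). assert (A6 := hs_sig k).
      assert (M1 : hs N4 <= rho / 8) by (eapply Rle_trans; [left; apply H4|apply Rmin_l]).
      assert (M2 : hs N4 < eta / (3 * a)) by (eapply Rlt_le_trans; [apply H4|apply Rmin_r]).
      assert (M3 : a * hs N4 < eta / 3).
      { apply Rmult_lt_compat_l with (r := a) in M2; auto.
        replace (a * (eta / (3 * a))) with (eta / 3) in M2 by (field; lra). auto. }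
      assert (G := G5 (sig_ k) u (u + tau) a Ha ltac:(lra)).
      assert (G' : a * (u + tau - u - hs (sig_ k)) <= f (Gam k u) - f (Gam k (u + tau))).
      { apply G. intros y Hy. unfold a.
        assert (Hdy : d (gam u) y < rho).
        { assert (T := d_tri (gam u) (Gam k u) y). rewrite d_sym in H1. unfold Gam in T, H1.
          assert (Hh0 := hs_pos (sig_ k)). lra. }
        specialize (Hrho y Hdy). apply Rabs_def2 in Hrho. lra. }
      apply Rabs_def2 in H2. apply Rabs_def2 in H3.
      assert (a * hs (sig_ k) <= a * hs N4) by (apply Rmult_le_compat_l; lra).
      replace (u + tau - u - hs (sig_ k)) with (tau - hs (sig_ k)) in G' by ring. nra. }
    assert ((s (gam u) - e) * tau <= a * tau) by (apply Rmult_le_compat_r; unfold a; lra). lra.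
Qed.

Lemma gam_up u e : 0 < e -> exists del, 0 < del /\ forall tau, 0 < tau < del ->
  f (gam u) - f (gam (u + tau)) <= (s (gam u) + e) * tau.
Proof.
  intros He. destruct (P1 (gam u) e He) as [del [Hd Hdel]].
  exists del. split; auto. intros tau Ht.
  assert (L := gam_lip u (u + tau)). replace (u - (u + tau)) with (- tau) in L by ring.
  rewrite Rabs_Ropp, Rabs_pos_eq in L by lra.
  specialize (Hdel (gam (u + tau)) ltac:(lra)).
  assert (Hs0 := s_nonneg (gam u)).
  assert ((s (gam u) + e) * d (gam u) (gam (u + tau)) <= (s (gam u) + e) * tau) by (apply Rmult_le_compat_l; lra).
  lra.
Qed.

Definition ceps (h : R -> R) t := forall e, 0 < e -> exists del, 0 < del /\
  forall y, Rabs (y - t) < del -> Rabs (h y - h t) < e.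

Lemma comp_cont (g : X -> R) : m_continuous d g -> forall t, ceps (fun u => g (gam u)) t.
Proof.
  intros Hg t e He. destruct (Hg (gam t) e He) as [del [Hd Hdel]].
  exists del. split; auto. intros y Hy. apply Hdel.
  eapply Rle_lt_trans; [apply gam_lip|]. rewrite Rabs_minus_sym. auto.
Qed.

Lemma main_sec : exists gamma : R -> X,
  (forall t1 t2, d (gamma t1) (gamma t2) <= Rabs (t1 - t2)) /\ gamma 0 = x0 /\
  (forall u e, 0 <= u -> 0 < e -> exists del, 0 < del /\ forall tau, 0 < tau < del ->
     Rabs (f (gamma (u + tau)) - f (gamma u) + s (gamma u) * tau) <= e * tau) /\
  (forall t, ceps (fun u => f (gamma u)) t) /\ (forall t, ceps (fun u => s (gamma u)) t).
Proof.
  exists gam. split; [apply gam_lip|split; [apply gam_0|split; [|split; apply comp_cont; auto]]].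
  intros u e Hu He. destruct (gam_desc u e Hu He) as [d1 [Hd1 H1]].
  destruct (gam_up u e He) as [d2 [Hd2 H2]].
  exists (Rmin d1 d2). split; [apply Rmin_pos; auto|]. intros tau Ht.
  assert (tau < d1) by (eapply Rlt_le_trans; [apply Ht|apply Rmin_l]).
  assert (tau < d2) by (eapply Rlt_le_trans; [apply Ht|apply Rmin_r]).
  specialize (H1 tau ltac:(lra)). specialize (H2 tau ltac:(lra)).
  apply Rabs_le. nra.
Qed.
End S.

Lemma RD (phi : R -> R) a b : a <= b -> (forall t, ceps phi t) ->
  (forall u e, a <= u -> u < b -> 0 < e -> exists del, 0 < del /\ forall tau, 0 < tau < del ->
     phi (u + tau) - phi u <= e * tau) -> phi b <= phi a.
Proof.
  intros Hab Hc Hr. apply le_epsilon. intros eta Heta.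
  set (eps := eta / (b - a + 1)).
  assert (Heps : 0 < eps) by (apply Rdiv_lt_0_compat; lra).
  set (good := fun w => phi w - phi a <= eps * (w - a)).
  set (S := fun v => a <= v <= b /\ forall w, a <= w <= v -> good w).
  assert (Sa : S a).
  { split; [lra|]. intros w Hw. assert (w = a) by lra. subst. unfold good. lra. }
  destruct (completeness S) as [c [Hub Hlub]].
  { exists b. intros v [Hv _]. lra. }
  { exists a. auto. }
  assert (Hac : a <= c) by (apply Hub; auto).
  assert (Hcb : c <= b) by (apply Hlub; intros v [Hv _]; lra).
  assert (Hbelow : forall w, a <= w < c -> good w).
  { intros w Hw. destruct (classic (exists v, S v /\ w < v)) as [[v [[_ Hv] Hwv]]|Hn].
    - apply Hv. lra.
    - exfalso. assert (c <= w); [|lra]. apply Hlub. intros v Sv. apply Rnot_lt_le. intro. apply Hn; eauto. }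
  assert (Hgc : good c).
  { destruct (Rle_lt_or_eq_dec _ _ Hac) as [Hlt|Heq]; [|subst; unfold good; lra].
    apply Rnot_lt_le. intro Hbad. set (gap := phi c - phi a - eps * (c - a)).
    destruct (Hc c (gap/2)) as [del [Hd Hdel]]; [unfold gap; lra|].
    set (w := Rmax a (c - del/2)).
    assert (Hw1 : a <= w) by apply Rmax_l.
    assert (Hw2 : c - del/2 <= w) by apply Rmax_r.
    assert (Hw3 : w < c) by (unfold w; apply Rmax_lub_lt; lra).
    assert (Gw := Hbelow w ltac:(lra)). unfold good in Gw.
    assert (Hd2 := Hdel w ltac:(apply Rabs_def1; lra)). apply Rabs_def2 in Hd2.
    assert (eps * (w - a) <= eps * (c - a)) by (apply Rmult_le_compat_l; lra).
    unfold gap in *. lra. }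
  assert (Hall : forall w, a <= w <= c -> good w).
  { intros w Hw. destruct (Rle_lt_or_eq_dec w c (proj2 Hw)); [apply Hbelow; lra|subst; auto]. }
  assert (Hcb' : c = b).
  { destruct (Rle_lt_or_eq_dec _ _ Hcb) as [Hlt|Heq]; auto. exfalso.
    destruct (Hr c eps Hac Hlt Heps) as [del [Hd Hdel]].
    set (v := c + Rmin del (b - c) / 2).
    assert (Hm1 : 0 < Rmin del (b - c)) by (apply Rmin_pos; lra).
    assert (Hm2 := Rmin_l del (b - c)). assert (Hm3 := Rmin_r del (b - c)).
    assert (Sv : S v).
    { split; [unfold v; lra|]. intros w Hw. destruct (Rle_dec w c) as [Hwc|Hwc]; [apply Hall; lra|].
      assert (E := Hdel (w - c) ltac:(unfold v in Hw; lra)).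
      replace (c + (w - c)) with w in E by ring. unfold good in *. assert (Hgc' := Hgc). nra. }
    assert (v <= c) by (apply Hub; auto). unfold v in H. lra. }
  subst c. unfold good in Hgc.
  assert (eps * (b - a) <= eps * (b - a + 1)) by (apply Rmult_le_compat_l; lra).
  replace (eps * (b - a + 1)) with eta in H by (unfold eps; field; lra). lra.
Qed.

Lemma ceps_cont h t : ceps h t -> continuous h t.
Proof.
  intros H. apply continuity_pt_filterlim. unfold continuity_pt, continue_in, limit1_in, limit_in.
  intros e He. destruct (H e He) as [del [Hd Hdel]]. exists del. split; auto.
  intros y [_ Hy]. simpl in *. unfold R_dist in *. auto.
Qed.

Lemma cont_ceps h t : continuity_pt h t -> ceps h t.
Proof.
  unfold continuity_pt, continue_in, limit1_in, limit_in. intros H e He.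
  destruct (H e He) as [del [Hd Hdel]]. exists del. split; auto. intros y Hy.
  destruct (Req_dec y t) as [->|Hne].
  - unfold Rminus. rewrite Rplus_opp_r, Rabs_R0. auto.
  - apply (Hdel y). split; [split; [constructor|intro E; apply Hne; auto]|]. simpl. unfold R_dist. auto.
Qed.

Lemma INT (F g : R -> R) : (forall t, ceps F t) -> (forall t, ceps g t) ->
  (forall u e, 0 <= u -> 0 < e -> exists del, 0 < del /\ forall tau, 0 < tau < del ->
     Rabs (F (u + tau) - F u + g u * tau) <= e * tau) ->
  forall t, 0 <= t -> F t = F 0 - RInt g 0 t.
Proof.
  intros HF Hg Hd t Ht.
  set (I := fun v => RInt g 0 v).
  assert (Hex : forall v, ex_RInt g 0 v).
  { intros v. apply (@ex_RInt_continuous R_CompleteNormedModule). intros z _. apply ceps_cont. auto. }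
  assert (HdI : forall v, derivable_pt_lim I v (g v)).
  { intros v. apply is_derive_Reals. apply (is_derive_RInt g I 0 v).
    - apply filter_forall. intros b0. unfold I. apply (@RInt_correct R_CompleteNormedModule). auto.
    - apply ceps_cont. auto. }
  assert (HcI : forall v, ceps I v).
  { intros v. apply cont_ceps. apply derivable_continuous_pt. exists (g v). apply HdI. }
  set (H := fun v => F v + I v).
  assert (HcH : forall v, ceps H v).
  { intros v e He. destruct (HF v (e/2)) as [d1 [Hd1 H1]]; [lra|].
    destruct (HcI v (e/2)) as [d2 [Hd2 H2]]; [lra|].
    exists (Rmin d1 d2). split; [apply Rmin_pos; auto|]. intros y Hy.
    assert (Rabs (y - v) < d1) by (eapply Rlt_le_trans; [apply Hy|apply Rmin_l]).
    assert (Rabs (y - v) < d2) by (eapply Rlt_le_trans; [apply Hy|apply Rmin_r]).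
    specialize (H1 y ltac:(auto)). specialize (H2 y ltac:(auto)).
    unfold H. apply Rabs_def2 in H1. apply Rabs_def2 in H2. apply Rabs_def1; lra. }
  assert (HrH : forall u e, 0 <= u -> 0 < e -> exists del, 0 < del /\ forall tau, 0 < tau < del ->
     Rabs (H (u + tau) - H u) <= e * tau).
  { intros u e Hu He. destruct (Hd u (e/2) Hu ltac:(lra)) as [d1 [Hd1 H1]].
    destruct (HdI u (e/2) ltac:(lra)) as [d2 H2].
    exists (Rmin d1 d2). split; [apply Rmin_pos; auto; apply cond_pos|]. intros tau Ht'.
    assert (tau < d1) by (eapply Rlt_le_trans; [apply Ht'|apply Rmin_l]).
    assert (tau < d2) by (eapply Rlt_le_trans; [apply Ht'|apply Rmin_r]).
    specialize (H1 tau ltac:(lra)).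
    specialize (H2 tau ltac:(lra) ltac:(rewrite Rabs_pos_eq; lra)).
    assert (E : Rabs (I (u + tau) - I u - g u * tau) <= e / 2 * tau).
    { replace (I (u + tau) - I u - g u * tau) with (((I (u + tau) - I u) / tau - g u) * tau) by (field; lra).
      rewrite Rabs_mult, (Rabs_pos_eq tau) by lra. apply Rmult_le_compat_r; lra. }
    unfold H. replace (F (u + tau) + I (u + tau) - (F u + I u)) with
      ((F (u + tau) - F u + g u * tau) + (I (u + tau) - I u - g u * tau)) by ring.
    eapply Rle_trans; [apply Rabs_triang|]. lra. }
  assert (A1 : H t <= H 0).
  { apply (RD H 0 t Ht HcH). intros u e Hu _ He. destruct (HrH u e Hu He) as [del [Hdl Hdel]].
    exists del. split; auto. intros tau Htau. specialize (Hdel tau Htau). assert (Hx1 := Rle_abs (H (u + tau) - H u)). assert (Hx2 := Rle_abs (- (H (u + tau) - H u))). rewrite Rabs_Ropp in Hx2. lra. }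
  assert (A2 : (fun v => - H v) t <= (fun v => - H v) 0).
  { apply (RD (fun v => - H v) 0 t Ht).
    - intros v e He. destruct (HcH v e He) as [del [Hdl Hdel]]. exists del. split; auto.
      intros y Hy. specialize (Hdel y Hy). replace (- H y - - H v) with (- (H y - H v)) by ring.
      rewrite Rabs_Ropp. auto.
    - intros u e Hu _ He. destruct (HrH u e Hu He) as [del [Hdl Hdel]].
      exists del. split; auto. intros tau Htau. specialize (Hdel tau Htau). assert (Hx1 := Rle_abs (H (u + tau) - H u)). assert (Hx2 := Rle_abs (- (H (u + tau) - H u))). rewrite Rabs_Ropp in Hx2. lra. }
  simpl in A2. unfold H, I in A1, A2. rewrite RInt_point in A1, A2. simpl in A1, A2.
  unfold zero in A1, A2. simpl in A1, A2. unfold I. lra.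
Qed.

Theorem corollary3p6 (X : Type) (d : X -> X -> R) (f : X -> R) (s : X -> R) :
  is_metric d ->
  proper_metric d ->
  m_continuous d f ->
  (forall x, is_local_slope d f x (Finite (s x))) ->
  m_continuous d s ->
  forall x : X, s x <> 0 ->
    exists (T : R) (gamma : R -> X),
      0 < T /\
      (forall t1 t2, 0 <= t1 <= T -> 0 <= t2 <= T ->
         d (gamma t1) (gamma t2) <= Rabs (t1 - t2)) /\
      gamma 0 = x /\
      (forall t, 0 <= t <= T ->
         f (gamma t) = f x - RInt (fun u => s (gamma u)) 0 t).
Proof.
  intros Hm Hp Hf Hsl Hs x _.
  destruct (main_sec d f s Hm Hp Hf Hsl Hs x) as [gamma [H1 [H2 [H3 [H4 H5]]]]].
  exists 1, gamma. split; [lra|]. split; [intros; apply H1|]. split; auto.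
  intros t Ht. rewrite <- H2.
  apply (INT (fun u => f (gamma u)) (fun u => s (gamma u))); auto. lra.
Qed.
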